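(* Let $\mathcal{S}$ be a semi-primitive subspace of $\mathrm{Mat}_{m,n}(\mathbb{K})$ with $\#\mathbb{K}>\mathrm{urk}(\mathcal{S})$ and $n>0$. Then $\mathcal{S}$ has the column property.
   Context: $\mathrm{urk}$ is the maximal rank of a matrix in the space. Matrix spaces are equivalent ($\sim$) if $\mathcal{M}=P\mathcal{M}'Q$ with $P,Q$ invertible. A subspace is defective if none of its matrices has rank equal to its number of columns. $\mathcal{S}$ is $(r,s)$-decomposed ($0\le r\le m$, $1\le s\le n$) if every $M\in\mathcal{S}$ is of the form $\begin{bmatrix} ?_{r\times s}& C(M)\\ B(M)&0_{(m-r)\times(n-s)}\end{bmatrix}$, with lower space $B(\mathcal{S})$; $\mathcal{S}$ has the column property if for every such $(r,s)$ and every $(r,s)$-decomposed $\mathcal{S}'\sim\mathcal{S}$, the lower space of $\mathcal{S}'$ is defective. For an operator space $\mathcal{T}\subseteq\mathcal{L}(U,V)$: $\mathcal{T}$ is reduced if $\bigcap_{f}\ker f=\{0\}$ and $\sum_f\mathrm{im} f=V$; $c$-defective if $\dim\ker f\geq c$ for all $f\in\mathcal{T}$; its defectiveness index is the greatest such $c$; semi-primitive if reduced and there is no linear hyperplane $U'$ of $U$ with $\{f_{|U'}\mid f\in\mathcal{T}\}$ $c$-defective, $c$ being the defectiveness index. A matrix space is semi-primitive if the corresponding subspace of $\mathcal{L}(\mathbb{K}^n,\mathbb{K}^m)$ is. *)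

(* Defs.v *)
From HB Require Import structures.
From mathcomp Require Import all_boot all_order all_algebra.
Set Implicit Arguments. Unset Strict Implicit. Unset Printing Implicit Defensive.
Import GRing.Theory.
Local Open Scope ring_scope.

(* A linear subspace of Mat_{m,n}(K) is represented, as in mxalgebra, by the
   row space of a matrix S : 'M[K]_(k, m * n) whose rows are the vectorised
   (mxvec) matrices spanning the subspace. *)
Definition inS (K : fieldType) (m n k : nat) (S : 'M[K]_(k, m * n))
  (M : 'M[K]_(m, n)) : Prop := (mxvec M <= S)%MS.

Definition card_gt (K : fieldType) (r : nat) : Prop :=
  exists f : 'I_r.+1 -> K, injective f.

Definition is_urk (K : fieldType) (m n k : nat) (S : 'M[K]_(k, m * n))
  (r : nat) : Prop :=
  (exists2 M, inS S M & \rank M = r) /\ (forall M, inS S M -> (\rank M <= r)%N).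

Definition mxspace_equiv (K : fieldType) (m n k k' : nat)
  (S : 'M[K]_(k, m * n)) (S' : 'M[K]_(k', m * n)) : Prop :=
  exists (P : 'M[K]_m) (Q : 'M[K]_n),
    P \in unitmx /\ Q \in unitmx /\
    forall M, inS S M <-> exists2 M', inS S' M' & M = P *m M' *m Q.

Definition decomposed (K : fieldType) (m n k : nat) (S : 'M[K]_(k, m * n))
  (r s : nat) : Prop :=
  forall M, inS S M -> forall (i : 'I_m) (j : 'I_n),
    (r <= i)%N -> (s <= j)%N -> M i j = 0.

Lemma low_idx_proof (m r : nat) (i : 'I_(m - r)) : (r + i < m)%N.
Proof. by rewrite -ltn_subRL. Qed.

Definition low_idx (m r : nat) (i : 'I_(m - r)) : 'I_m :=
  Ordinal (low_idx_proof i).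

Definition lower_block (K : fieldType) (m n : nat) (r : 'I_m.+1) (s : 'I_n.+1)
  (M : 'M[K]_(m, n)) : 'M[K]_(m - r, s) :=
  \matrix_(i < m - r, j < s) M (low_idx i) (@widen_ord s n (ltn_ord s) j).

Definition lower_defective (K : fieldType) (m n k : nat) (S : 'M[K]_(k, m * n))
  (r : 'I_m.+1) (s : 'I_n.+1) : Prop :=
  forall M, inS S M -> \rank (lower_block r s M) <> s.

Definition column_property (K : fieldType) (m n k : nat)
  (S : 'M[K]_(k, m * n)) : Prop :=
  forall (r : 'I_m.+1) (s : 'I_n.+1), (0 < s)%N ->
  forall (k' : nat) (S' : 'M[K]_(k', m * n)),
    mxspace_equiv S S' -> decomposed S' r s -> lower_defective S' r s.

(* Matrices act on column vectors: M : K^n -> K^m.  ker M is the row kernel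
   of M^T (x^T M^T = 0 iff M x = 0). *)
Definition reduced (K : fieldType) (m n k : nat) (S : 'M[K]_(k, m * n)) : Prop :=
  (forall x : 'cV[K]_n, (forall M, inS S M -> M *m x = 0) -> x = 0) /\
  (forall y : 'cV[K]_m, exists (p : nat) (Ms : 'I_p -> 'M[K]_(m, n))
     (xs : 'I_p -> 'cV[K]_n),
     (forall i, inS S (Ms i)) /\ y = \sum_(i < p) Ms i *m xs i).

Definition c_defective (K : fieldType) (m n k : nat) (S : 'M[K]_(k, m * n))
  (c : nat) : Prop :=
  forall M, inS S M -> (c <= \rank (kermx M^T))%N.

Definition defect_index (K : fieldType) (m n k : nat) (S : 'M[K]_(k, m * n))
  (c : nat) : Prop :=
  c_defective S c /\ forall c', c_defective S c' -> (c' <= c)%N.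

(* Restrictions to a hyperplane U' (row space of H, of rank n-1):
   ker (M|U') = ker M :&: U'. *)
Definition semi_primitive (K : fieldType) (m n k : nat)
  (S : 'M[K]_(k, m * n)) : Prop :=
  reduced S /\
  forall c, defect_index S c ->
  forall H : 'M[K]_n, \rank H = n.-1 ->
    ~ (forall M, inS S M -> (c <= \rank (kermx M^T :&: H)%MS)%N).

(* Main.v *)
Require Import Defs.
From HB Require Import structures.
From mathcomp Require Import all_boot all_order all_algebra.
From mathcomp Require Import perm zify.

Section Poly.
Set Implicit Arguments. Unset Strict Implicit. Unset Printing Implicit Defensive.
Import GRing.Theory.
Local Open Scope ring_scope.
Variable K : fieldType.

Lemma prod_lin_coef (I : Type) (r : seq I) (a b : I -> K) :
  (\prod_(i <- r) ('X * (a i)%:P + (b i)%:P))`_(size r) = \prod_(i <- r) a i /\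
  forall j, (size r < j)%N -> (\prod_(i <- r) ('X * (a i)%:P + (b i)%:P))`_j = 0.
Proof.
elim: r => [|x r [IH1 IH2]].
  by rewrite !big_nil coef1; split=> // j Hj; rewrite coef1 -(prednK Hj).
rewrite !big_cons mulrDl -mulrA !coefD coefXM !coefCM /= IH1.
rewrite (IH2 (size r).+1) // mulr0 addr0 mulrC; split=> // -[|j] // Hj.
by rewrite coefD coefXM !coefCM /= !IH2 ?mulr0 ?addr0 // ltnW.
Qed.

Definition polylin (p q : nat) (A B : 'M[K]_(p, q)) : 'M[{poly K}]_(p, q) :=
  \matrix_(i, j) ('X * (A i j)%:P + (B i j)%:P).

Lemma det_polylin_coef (D : nat) (A B : 'M[K]_D) :
  (\det (polylin A B))`_D = \det A /\
  forall j, (D < j)%N -> (\det (polylin A B))`_j = 0.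
Proof.
have sz : size (index_enum 'I_D) = D by rewrite [index_enum _]unlock -enumT size_enum_ord.
have Hs (b : bool) (p : {poly K}) i : ((-1) ^+ b * p)`_i = (-1) ^+ b * p`_i.
  by case: b; rewrite ?expr0 ?expr1 ?mul1r ?mulN1r ?coefN.
rewrite /determinant; split.
  rewrite coef_sum; apply: eq_bigr => s _; rewrite Hs; congr (_ * _).
  under eq_bigr do rewrite mxE.
  by have [<- _] := prod_lin_coef (index_enum 'I_D) (fun i => A i ((s : perm.perm_type 'I_D) i)) (fun i => B i ((s : perm.perm_type 'I_D) i)); rewrite sz.
move=> j Hj; rewrite coef_sum big1 // => s _; rewrite Hs.
under eq_bigr do rewrite mxE.
have [_ ->] := prod_lin_coef (index_enum 'I_D) (fun i => A i ((s : perm.perm_type 'I_D) i)) (fun i => B i ((s : perm.perm_type 'I_D) i)).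
  by rewrite mulr0.
by rewrite sz.
Qed.

Lemma det_polylin_eval (D : nat) (A B : 'M[K]_D) (t : K) :
  (\det (polylin A B)).[t] = \det (t *: A + B).
Proof.
have := det_map_mx (horner_eval t) (polylin A B); rewrite /= horner_evalE => <-.
by congr (\det _); apply/matrixP => i j; rewrite !mxE horner_evalE !hornerE.
Qed.

Lemma polylin_block (p1 p2 q1 q2 : nat) (A1 B1 : 'M[K]_(p1, q1)) (A2 B2 : 'M[K]_(p1, q2))
   (A3 B3 : 'M[K]_(p2, q1)) (A4 B4 : 'M[K]_(p2, q2)) :
  polylin (block_mx A1 A2 A3 A4) (block_mx B1 B2 B3 B4) =
  block_mx (polylin A1 B1) (polylin A2 B2) (polylin A3 B3) (polylin A4 B4).
Proof.
apply/matrixP => i j; rewrite !mxE.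
by case: (split i) => a; rewrite !mxE; case: (split j) => b; rewrite !mxE.
Qed.

Lemma polylin00 (p q : nat) : polylin (0 : 'M[K]_(p, q)) 0 = 0.
Proof. by apply/matrixP => i j; rewrite !mxE mulr0 add0r. Qed.

Lemma subE (a b p q : nat) (f : 'I_p -> 'I_a) (g : 'I_q -> 'I_b) (X : 'M[K]_(a, b)) :
  rowsub f 1%:M *m X *m colsub g 1%:M = mxsub f g X.
Proof. rewrite -mulmxA mulmx_colsub mulmx1 -rowsubE. by apply/matrixP => i j; rewrite !mxE. Qed.

Lemma sel1_free (a d : nat) (f : 'I_d -> 'I_a) : injective f ->
  row_free (rowsub f (1%:M : 'M[K]_a)).
Proof.
move=> inj; rewrite /row_free eqn_leq rank_leq_row /=.
have E : rowsub f (1%:M : 'M[K]_a) *m (rowsub f 1%:M)^T = 1%:M.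
  rewrite trmx_mxsub trmx1 -[rowsub f 1%:M]mulmx1 subE.
  by apply/matrixP => i j; rewrite !mxE (inj_eq inj).
by rewrite -{1}(mxrank1 K d) -E mxrankM_maxl.
Qed.

Lemma ex_rowfree (a b : nat) (X : 'M[K]_(a, b)) d : \rank X = d ->
  exists f : 'I_d -> 'I_a, row_free (rowsub f X).
Proof. by move=> <-; exists (maxrankfun X); exact: maxrowsub_free. Qed.

Lemma ex_unit_full (d b : nat) (X : 'M[K]_(d, b)) : row_free X ->
  exists g : 'I_d -> 'I_b, colsub g X \in unitmx.
Proof.
move=> Hf; have Hr : \rank X^T = d by rewrite mxrank_tr; exact/eqP.
have [g Hg] := ex_rowfree Hr.
by exists g; rewrite -unitmx_tr -row_free_unit trmx_mxsub.
Qed.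

Lemma ex_unit (a b : nat) (X : 'M[K]_(a, b)) d : (d <= \rank X)%N ->
  exists (f : 'I_d -> 'I_a) (g : 'I_d -> 'I_b), mxsub f g X \in unitmx.
Proof.
move=> hd; have [f1 Hf1] := @ex_rowfree _ _ X _ erefl.
have winj : injective (widen_ord hd).
  by move=> x y /(congr1 val) /= /val_inj.
have Hf : row_free (rowsub (widen_ord hd) (rowsub f1 X)).
  by rewrite /row_free rowsubE mxrankMfree //; exact: sel1_free.
have [g Hg] := ex_unit_full Hf.
by exists (f1 \o widen_ord hd), g; rewrite mxsubcr rowsub_comp.
Qed.

End Poly.

Section Key.
Set Implicit Arguments. Unset Strict Implicit. Unset Printing Implicit Defensive.
Import GRing.Theory.
Local Open Scope ring_scope.
Variable K : fieldType.

Definition Jm (n s : nat) : 'M[K]_(n - s, n) := rowsub (@low_idx n s) 1%:M.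

Lemma key (m n k' : nat) (S' : 'M[K]_(k', m * n)) (r : 'I_m.+1) (s : 'I_n.+1) (u : nat)
  (fi : 'I_u.+1 -> K) : injective fi ->
  (forall N, inS S' N -> (\rank N <= u)%N) ->
  decomposed S' r s ->
  forall M0, inS S' M0 -> \rank (lower_block r s M0) = s ->
  forall N, inS S' N -> (\rank (Jm n s *m N^T) + s <= u)%N.
Proof.
move=> fiinj Hrk Hdec M0 HM0 HB N HN.
set Lr := rowsub (@low_idx m r) (1%:M : 'M[K]_m).
set Ws := colsub (@widen_ord s n (ltn_ord s)) (1%:M : 'M[K]_n).
have lbE X : lower_block r s X = Lr *m X *m Ws.
  by rewrite /Lr /Ws subE; apply/matrixP => i j; rewrite !mxE.
have su : (s <= u)%N.
  rewrite -HB lbE; apply: leq_trans (mxrankM_maxl _ _) _.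
  apply: leq_trans (mxrankM_maxr _ _) _; exact: Hrk.
have [f0 [g0 HU0]] : exists (f : 'I_s -> 'I_(m - r)) (g : 'I_s -> 'I_s),
    mxsub f g (lower_block r s M0) \in unitmx by apply: ex_unit; rewrite HB.
set G := Jm n s *m N^T.
rewrite leqNgt; apply/negP => Hlt.
set d := (u.+1 - s)%N.
have dsu : (d + s = u.+1)%N by rewrite /d subnK // (leqW su).
have [h' [g HC]] : exists (h : 'I_d -> 'I_(n - s)) (g : 'I_d -> 'I_m),
    mxsub h g G \in unitmx by apply: ex_unit; rewrite /d; lia.
set R1 := (colsub g (1%:M : 'M[K]_m))^T.
set C1 := (Jm n s)^T *m (rowsub h' (1%:M : 'M[K]_(n - s)))^T.
set R2 := rowsub f0 (1%:M : 'M[K]_(m - r)) *m Lr.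
set C2 := Ws *m colsub g0 (1%:M : 'M[K]_s).
pose Zs (X : 'M[K]_(m, n)) : 'M[K]_(d + s) := col_mx R1 R2 *m X *m row_mx C1 C2.
have ZsE X : Zs X = block_mx (R1 *m X *m C1) (R1 *m X *m C2) (R2 *m X *m C1) (R2 *m X *m C2).
  by rewrite /Zs mul_col_mx mul_mx_row !mul_col_mx block_mxEh.
have Zrk X : inS S' X -> \det (Zs X) = 0.
  move=> HX; apply/eqP; rewrite -[_ == 0]negbK -unitfE -unitmxE -row_free_unit /row_free.
  apply/negP => /eqP Hr; have := Hrk X HX.
  have : (\rank (Zs X) <= \rank X)%N.
    by rewrite /Zs; apply: leq_trans (mxrankM_maxl _ _) (mxrankM_maxr _ _).
  lia.
have Z0 X : inS S' X -> R2 *m X *m C1 = 0.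
  move=> HX.
  have -> : R2 *m X *m C1 = rowsub f0 1%:M *m (Lr *m X *m (Jm n s)^T) *m (rowsub h' 1%:M)^T.
    by rewrite /R2 /C1 !mulmxA.
  have -> : Lr *m X *m (Jm n s)^T = 0; last by rewrite mulmx0 mul0mx.
  rewrite /Jm trmx_mxsub trmx1 /Lr subE; apply/matrixP => i j; rewrite !mxE.
  by apply: Hdec => //=; rewrite leq_addr.
have HCt : R1 *m N *m C1 = (mxsub h' g G)^T.
  by rewrite -subE /G !trmx_mul trmxK /R1 /C1 !mulmxA.
have HB0 : R2 *m M0 *m C2 = mxsub f0 g0 (lower_block r s M0).
  by rewrite lbE -subE /R2 /C2 !mulmxA.
pose p := \det (polylin (R1 *m M0 *m C1) (R1 *m N *m C1)).
pose q := \det (polylin (R2 *m M0 *m C2) (R2 *m N *m C2)).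
have PE : \det (polylin (Zs M0) (Zs N)) = p * q.
  by rewrite !ZsE (Z0 M0 HM0) (Z0 N HN) polylin_block polylin00 det_ublock.
have pn0 : p != 0.
  apply: contraTneq HC => p0; rewrite unitmxE unitfE negbK -[\det (mxsub _ _ _)]det_tr -HCt.
  have := det_polylin_eval (R1 *m M0 *m C1) (R1 *m N *m C1) 0.
  by rewrite -/p p0 horner0 scale0r add0r => <-.
have qn0 : q != 0.
  have [Hq _] := det_polylin_coef (R2 *m M0 *m C2) (R2 *m N *m C2).
  apply: contraTneq HU0 => q0; rewrite unitmxE unitfE negbK -HB0 -Hq -/q q0 coef0.
  by [].
have HS t : inS S' (t *: M0 + N).
  rewrite /inS in HM0 HN *; rewrite linearP; apply: addmx_sub => //; exact: scalemx_sub.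
have Zlin t : t *: Zs M0 + Zs N = Zs (t *: M0 + N).
  by rewrite /Zs mulmxDr mulmxDl -scalemxAr -scalemxAl.
have Psz : (size (\det (polylin (Zs M0) (Zs N))) <= d + s)%N.
  apply/leq_sizeP => j; rewrite leq_eqVlt => /orP [/eqP <- | Hj].
    have [-> _] := det_polylin_coef (Zs M0) (Zs N); exact: Zrk.
  by have [_ ->] := det_polylin_coef (Zs M0) (Zs N).
have Pn0 : \det (polylin (Zs M0) (Zs N)) != 0 by rewrite PE mulf_neq0.
have Hroots : all (root (\det (polylin (Zs M0) (Zs N)))) (map fi (enum 'I_u.+1)).
  by apply/allP => x _; rewrite /root det_polylin_eval Zlin Zrk.
have Huniq : uniq (map fi (enum 'I_u.+1)) by rewrite map_inj_uniq ?enum_uniq.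
have := max_poly_roots Pn0 Hroots Huniq.
rewrite size_map size_enum_ord => H1. move: Psz H1; move: (size _) => z; clearbody d; lia.
Qed.

End Key.

Section MainProof.
Set Implicit Arguments. Unset Strict Implicit. Unset Printing Implicit Defensive.
Import GRing.Theory.
Local Open Scope ring_scope.

Lemma main_aux (K : fieldType) (m n k : nat) (S : 'M[K]_(k, m * n)) :
  semi_primitive S ->
  (exists r, is_urk S r /\ card_gt K r) ->
  (0 < n)%N ->
  column_property S.
Proof.
move=> [_ hsp] [u [[[M1 HM1 HrM1] Hurk] [fi fiinj]]] hn r s hs k' S'
  [P [Q [HP [HQ Heq]]]] Hdec M0 HM0 HB.
have HQt : Q^T \in unitmx by rewrite unitmx_tr.
have Hrk : forall N, inS S' N -> (\rank N <= u)%N.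
  move=> N HN; have HM : inS S (P *m N *m Q) by apply/Heq; exists N.
  apply: leq_trans (Hurk _ HM).
  have E : N = invmx P *m (P *m N *m Q) *m invmx Q.
    by rewrite !mulmxA mulmxK // mulVmx // mul1mx.
  rewrite {1}E; apply: leq_trans (mxrankM_maxl _ _) _; exact: mxrankM_maxr.
have Hkey := key fiinj Hrk Hdec HM0 HB.
have Hdef : defect_index S (n - u).
  split.
    move=> M HM; rewrite mxrank_ker mxrank_tr; have := Hurk M HM; lia.
  by move=> c' Hc; have := Hc M1 HM1; rewrite mxrank_ker mxrank_tr HrM1.
pose H := copid_mx 1 *m invmx (Q^T) : 'M[K]_n.
have HrH : \rank H = n.-1.
  by rewrite /H mxrankMfree ?row_free_unit ?unitmx_inv // rank_copid_mx // subn1.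
apply: (hsp _ Hdef H HrH) => M HM.
have [N HN ->] := (proj1 (Heq M) HM).
have linj : injective (@low_idx n s).
  by move=> x y /(congr1 val) /= /addnI /val_inj.
have HJfree : row_free (Jm K n s) := sel1_free K linj.
set G := Jm K n s *m N^T.
pose Y := kermx G *m Jm K n s *m invmx Q^T.
have HY : (Y <= kermx (P *m N *m Q)^T :&: H)%MS.
  rewrite sub_capmx; apply/andP; split.
    apply/sub_kermxP.
    by rewrite /Y !trmx_mul !mulmxA mulmxKV // -(mulmxA (kermx G)) -/G mulmx_ker mul0mx.
  rewrite /Y /H; apply: submxMr; apply: submx_trans (submxMl _ _) _.
  apply/submxP; exists (Jm K n s); apply/matrixP => i j.
  rewrite /Jm mul_rowsub_mx mul1mx !mxE /=.
  by rewrite ltnNge (leq_trans hs (leq_addr _ _)) andbF subr0.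
apply: leq_trans (mxrankS HY).
rewrite /Y mxrankMfree ?row_free_unit ?unitmx_inv // mxrankMfree // mxrank_ker.
have := Hkey N HN; rewrite -/G; lia.
Qed.

End MainProof.

Theorem mainTheorem12 (K : fieldType) (m n k : nat) (S : 'M[K]_(k, m * n)) :
  semi_primitive S ->
  (exists r, is_urk S r /\ card_gt K r) ->
  (0 < n)%N ->
  column_property S.
Proof. exact: main_aux. Qed.
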